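(* Let $m\ge6$ be even, $t=m/2$, and $s$ an integer with $2\le s\le 2^{t-1}$. Let $E_1,\dots,E_\alpha$ be a partial spread in $\mathbb{F}_2^m$ and $A,B\subseteq\{1,\dots,\alpha\}$ with $|A|=|B|=s$ and $|A\cap B|=1$. Let $f=\sum_{i\in A}f_i$, $g=\sum_{i\in B}f_i$, and $F=\{f,g,f+g\}$. Then for every $\mathbf{h}\in\mathbb{F}_2^m$ and all $f_1,f_2\in F$ with $f_1\neq f_2$, \[\widehat{f_1}(\mathbf{0})+\widehat{f_2}(\mathbf{h})-\widehat{f_1+f_2}(\mathbf{h})\neq 2^m.\]
   Context: A partial spread in $\mathbb{F}_2^m$ ($m=2t$) is a set of subspaces $E_1,\dots,E_\alpha$ of $\mathbb{F}_2^m$, each of dimension $t$, with $E_i\cap E_j=\{\mathbf{0}\}$ for $i\ne j$. $f_i:\mathbb{F}_2^m\to\mathbb{F}_2$ is the indicator function of $E_i\setminus\{\mathbf{0}\}$; sums of Boolean functions are mod 2. For a Boolean function $h$, $\widehat{h}(\mathbf{w})=\sum_{\mathbf{x}\in\mathbb{F}_2^m}(-1)^{h(\mathbf{x})+\mathbf{w}\cdot\mathbf{x}}$ with the standard inner product. *)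

(* Defs.v *)
From HB Require Import structures.
From mathcomp Require Import all_boot all_order all_algebra.
Set Implicit Arguments. Unset Strict Implicit. Unset Printing Implicit Defensive.
Import GRing.Theory Num.Theory.
Local Open Scope ring_scope.

Notation vec m := 'rV['F_2]_m.
Notation boolfun m := {ffun vec m -> 'F_2}.

Definition dotv (m : nat) (w x : vec m) : 'F_2 := \sum_(i < m) w 0 i * x 0 i.

Definition sgnF2 (b : 'F_2) : int := if b == 0 then 1 else -1.

Definition walsh (m : nat) (h : boolfun m) (w : vec m) : int :=
  \sum_(x : vec m) sgnF2 (h x + dotv w x).

Definition partial_spread (m t alpha : nat) (E : 'I_alpha -> {vspace vec m}) : Prop :=
  (forall i, \dim (E i) = t) /\
  (forall i j, i != j -> (E i :&: E j)%VS = 0%VS).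

Definition spread_ind (m alpha : nat) (E : 'I_alpha -> {vspace vec m}) (i : 'I_alpha)
  : boolfun m := [ffun x => if (x \in E i) && (x != 0) then 1 else 0].

Definition spread_sum (m alpha : nat) (E : 'I_alpha -> {vspace vec m}) (A : {set 'I_alpha})
  : boolfun m := \sum_(i in A) spread_ind E i.

(* Main.v *)
Require Import Defs.
From HB Require Import structures.
From mathcomp Require Import all_boot all_order all_algebra all_field zify ring.
Import GRing.Theory Num.Theory.
Local Open Scope ring_scope.

Lemma F2_cases (a : 'F_2) : a = 0 \/ a = 1.
Proof. case: a => [[|[|n]] H]; [left|right|by []]; exact: val_inj. Qed.

Lemma F2_add_self (a : 'F_2) : a + a = 0.
Proof. case: (F2_cases a) => ->. by rewrite addr0. by apply: val_inj. Qed.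

Lemma vec_add_self m (v : vec m) : v + v = 0.
Proof. by apply/rowP => i; rewrite !mxE F2_add_self. Qed.

Lemma fun_add_self m (v : boolfun m) : v + v = 0.
Proof. by apply/ffunP => i; rewrite !ffunE F2_add_self. Qed.

Lemma sgnD a b : sgnF2 (a + b) = sgnF2 a * sgnF2 b.
Proof. case: (F2_cases a) => ->; case: (F2_cases b) => ->; rewrite ?addr0 ?add0r ?F2_add_self //. Qed.

Lemma dotvD m (w x y : vec m) : dotv w (x + y) = dotv w x + dotv w y.
Proof. by rewrite /dotv -big_split; apply: eq_bigr => i _; rewrite mxE mulrDr. Qed.

Lemma charsum m (P : {pred vec m}) (addP : forall x y, P x -> P y -> P (x+y)) w :
  (\sum_(x | P x) sgnF2 (dotv w x) = 0) \/ (\sum_(x | P x) sgnF2 (dotv w x) = #|P|%:Z).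
Proof.
case: (boolP [exists x, P x && (dotv w x == 1)]).
- move=> /existsP [v0 /andP [Pv0 /eqP dv0]]; left.
  set S := \sum_(x | P x) _.
  have HS : S = - S.
    rewrite {1}/S (reindex_inj (can_inj (addrK v0))) /=.
    rewrite (eq_bigl P); last first.
      move=> x; apply/idP/idP => Hx; last exact: addP.
      by have := addP _ _ Hx Pv0; rewrite -addrA vec_add_self addr0.
    rewrite /S -sumrN; apply: eq_bigr => x _.
    by rewrite dotvD sgnD dv0 /sgnF2 /= mulrN1.
  lia.
- rewrite negb_exists => /forallP H; right.
  rewrite (eq_bigr (fun _ => 1)); last first.
    move=> x Px; have := H x; rewrite Px /=.
    by case: (F2_cases (dotv w x)) => ->.
  by rewrite sumr_const natz.
Qed.

Lemma dotv0 m (w : vec m) : dotv w 0 = 0.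
Proof. by rewrite /dotv big1 // => i _; rewrite mxE mulr0. Qed.

Lemma walsh_add m (a b : boolfun m) w : (forall x, a x * b x = 0) ->
  walsh (a + b) w = walsh a w + walsh b w - \sum_x sgnF2 (dotv w x).
Proof.
move=> H; rewrite /walsh -big_split -sumrB; apply: eq_bigr => x _.
rewrite ffunE; have := H x.
case: (F2_cases (a x)) => ->; case: (F2_cases (b x)) => ->;
  case: (F2_cases (dotv w x)) => -> ; rewrite ?mul1r ?mul0r ?mulr0 => //= Hx;
  rewrite ?addr0 ?add0r ?F2_add_self /sgnF2 /=; try lia.
all: by move: Hx; move/eqP; rewrite oner_eq0.
Qed.

Lemma walsh_ind m alpha (E : 'I_alpha -> {vspace vec m}) j w :
  walsh (spread_ind E j) w = \sum_x sgnF2 (dotv w x)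
     - 2 * \sum_(x | x \in E j) sgnF2 (dotv w x) + 2.
Proof.
have step x : sgnF2 (spread_ind E j x + dotv w x) = sgnF2 (dotv w x)
   - 2 * (if (x \in E j) && (x != 0) then sgnF2 (dotv w x) else 0).
  rewrite ffunE sgnD; case: ifP => _; rewrite /sgnF2 /=;
  case: (dotv w x == 0); lia.
rewrite /walsh (eq_bigr _ (fun x _ => step x)) sumrB -mulr_sumr -big_mkcond /=.
rewrite [X in _ = _ - 2 * X + _](bigD1 0) ?mem0v //= dotv0 /sgnF2 /=.
ring.
Qed.

Lemma card_F2 : #|'F_2| = 2%N.
Proof. by rewrite card_Fp. Qed.

Lemma sum_full m (w : vec m) : (\sum_x sgnF2 (dotv w x) = 0) \/
  (\sum_x sgnF2 (dotv w x) = (2 ^ m)%N%:Z :> int).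
Proof.
have := @charsum m predT (fun (x y : vec m) _ _ => isT) w.
rewrite (@eq_card _ _ predT) // card_mx card_F2 mul1n.
by [].
Qed.

Lemma sum_sub m (V : {vspace vec m}) (w : vec m) :
  (\sum_(x | x \in V) sgnF2 (dotv w x) = 0) \/
  (\sum_(x | x \in V) sgnF2 (dotv w x) = (2 ^ \dim V)%N%:Z :> int).
Proof.
have := @charsum m [pred x | x \in V] (fun x y hx hy => memvD hx hy) w.
have -> : #|[pred x | x \in V]| = #|V| by apply: eq_card.
by rewrite card_vspace card_F2.
Qed.

Lemma ind_disj m t alpha (E : 'I_alpha -> {vspace vec m}) :
  partial_spread t E -> forall i j x, i != j ->
  spread_ind E i x * spread_ind E j x = 0.
Proof.
move=> [_ HE] i j x ij; rewrite !ffunE.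
case: ifP => [/andP [xi x0]|]; last by rewrite mul0r.
case: ifP => [/andP [xj _]|]; last by rewrite mulr0.
have : x \in (E i :&: E j)%VS by rewrite memv_cap xi xj.
by rewrite HE ?memv0 // (negbTE x0).
Qed.

Lemma key m t alpha (E : 'I_alpha -> {vspace vec m}) (w : vec m) :
  partial_spread t E -> (1 <= t)%N -> m = (2 * t)%N ->
  forall r : seq 'I_alpha, uniq r -> exists k : int,
    walsh (\sum_(i <- r) spread_ind E i) w =
      2 * (size r)%:Z + k * (4 * (2 ^ (t - 1))%N%:Z).
Proof.
move=> HP ht hm; have [Hd _] := HP.
have e2t : (2 ^ t = 2 ^ (t - 1) * 2)%N by rewrite -expnSr subn1 prednK.
elim=> [|j r IH] /=.
  move=> _; rewrite big_nil.
  have e2m : (2 ^ m = 2 ^ (t - 1) * 2 ^ (t - 1) * 4)%N.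
    have -> : m = ((t-1)+(t-1)+2)%N by lia.
    by rewrite !expnD.
  have -> : walsh 0 w = \sum_x sgnF2 (dotv w x).
    by rewrite /walsh; apply: eq_bigr => x _; rewrite ffunE add0r.
  case: (@sum_full _ w) => ->; first by exists 0; lia.
  exists (2 ^ (t - 1))%N; rewrite e2m; lia.
move=> /andP [jr ur]; have [k Hk] := IH ur.
rewrite big_cons walsh_add; last first.
  move=> x; rewrite sum_ffunE mulr_sumr big1_seq // => i /andP [_ ir].
  apply: ind_disj HP _ _ _ _; apply/eqP => ji; by rewrite ji ir in jr.
rewrite walsh_ind Hk.
case: (@sum_sub _ (E j) w) => ->; rewrite ?Hd.
  exists k; lia.
exists (k - 1); rewrite e2t; lia.
Qed.

Lemma key_set m t alpha (E : 'I_alpha -> {vspace vec m}) (w : vec m) :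
  partial_spread t E -> (1 <= t)%N -> m = (2 * t)%N ->
  forall C : {set 'I_alpha}, exists k : int,
    walsh (spread_sum E C) w = 2 * #|C|%:Z + k * (4 * (2 ^ (t - 1))%N%:Z).
Proof.
move=> HP ht hm C; rewrite /spread_sum -big_enum cardE.
exact: key HP ht hm _ (enum_uniq _).
Qed.

Lemma symdiff m alpha (E : 'I_alpha -> {vspace vec m}) (A B : {set 'I_alpha}) :
  spread_sum E A + spread_sum E B = spread_sum E ((A :\: B) :|: (B :\: A)).
Proof.
rewrite /spread_sum (big_setID B) [X in _ + X = _](big_setID A) /= setIC.
rewrite [RHS](eq_bigl [predU A :\: B & B :\: A]); last first.
  by move=> i; rewrite /= inE.
rewrite bigU /=; last first.
  by apply/pred0P => i /=; rewrite !inE; case: (i \in A); case: (i \in B).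
by rewrite addrACA fun_add_self add0r.
Qed.

Lemma card_symdiff alpha (A B : {set 'I_alpha}) s :
  #|A| = s -> #|B| = s -> #|A :&: B| = 1%N ->
  #|(A :\: B) :|: (B :\: A)| = (2 * s - 2)%N.
Proof.
move=> hA hB hI; rewrite cardsU.
have -> : (A :\: B) :&: (B :\: A) = set0.
  by apply/setP => i; rewrite !inE; case: (i \in A); case: (i \in B).
rewrite cards0 !cardsD hA hB hI setIC hI; lia.
Qed.

Lemma arith (U k n : int) : 0 < n -> n < U -> n = U * k -> False.
Proof.
move=> h0 h1 hn; rewrite hn in h0 h1; case: (lerP k 0) => hk.
  have : U * k <= 0 by rewrite pmulr_rle0 //; lia.
  lia.
have : U <= U * k by rewrite ler_peMr //; lia.
lia.
Qed.

Theorem lemma5 (m t s alpha : nat) (E : 'I_alpha -> {vspace 'rV['F_2]_m})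
  (A B : {set 'I_alpha}) :
  (6 <= m)%N -> m = (2 * t)%N -> (2 <= s)%N -> (s <= 2 ^ (t - 1))%N ->
  @partial_spread m t alpha E ->
  #|A| = s -> #|B| = s -> #|A :&: B| = 1%N ->
  let f := spread_sum E A in
  let g := spread_sum E B in
  forall (h : 'rV['F_2]_m) (f1 f2 : {ffun 'rV['F_2]_m -> 'F_2}),
    f1 \in [:: f; g; f + g] -> f2 \in [:: f; g; f + g] -> f1 != f2 ->
    walsh f1 0 + walsh f2 h - walsh (f1 + f2) h != (2 ^ m)%:Z.
Proof.
move=> hm6 hm hs2 hsU HP hA hB hI f g h f1 f2 H1 H2 neq.
have ht : (1 <= t)%N by lia.
move: hsU; set U := (2 ^ (t - 1))%N => hsU.

have U4 : (4 <= U)%N.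
  by rewrite /U (_ : 4 = 2 ^ 2)%N // leq_exp2l //; lia.
have e2m : (2 ^ m = U * U * 4)%N.
  have -> : m = ((t-1)+(t-1)+2)%N by lia.
  by rewrite !expnD.
have K := fun C w => @key_set m t alpha E w HP ht hm C.
have hfg : f + g = spread_sum E ((A :\: B) :|: (B :\: A)) by apply: symdiff.
have hD := @card_symdiff _ _ _ _ hA hB hI.
have hgf : g + f = f + g by rewrite addrC.
have hffg : f + (f + g) = g by rewrite addrA fun_add_self add0r.
have hgfg : g + (f + g) = f by rewrite addrC -addrA fun_add_self addr0.
have hfgf : (f + g) + f = g by rewrite addrC hffg.
have hfgg : (f + g) + g = f by rewrite -addrA fun_add_self addr0.
apply/eqP => Heq; move: H1 H2 neq Heq; rewrite !inE.
move=> /or3P [] /eqP -> /or3P [] /eqP ->; rewrite ?eqxx // => _;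
  rewrite ?hgf ?hffg ?hgfg ?hfgf ?hfgg ?hfg /f /g e2m;
  match goal with |- walsh (spread_sum E ?X) 0 + walsh (spread_sum E ?Y) h
          - walsh (spread_sum E ?Z) h = _ -> _ =>
    have [a Ha] := K X 0; have [b Hb] := K Y h; have [c Hc] := K Z h;
    rewrite Ha Hb Hc ?hA ?hB ?hD => Heq
  end.
all: rewrite -/U in Heq.
all: first [ apply: (@arith U%:Z (U%:Z - a - b + c) 1); lia
           | apply: (@arith U%:Z (U%:Z - a - b + c) (s%:Z - 1)); lia ].
Qed.
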